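(* Let $\bm G\in\{0,1\}^{n\times k}$ be a partition indicator matrix, $\bm\Omega\in[0,1]^{k\times k}$ symmetric, $\bm n_g=\bm G^\top\bm1$, $\bm N_g=\operatorname{diag}(\bm n_g)=\bm G^\top\bm G$, and assume all entries of $\bm\Omega\bm n_g$ are positive. Define the normalized affinity matrix $$\bm\Gamma=\bm N_g^{1/2}\operatorname{diag}(\bm\Omega\bm n_g)^{-1/2}\,\bm\Omega\,\operatorname{diag}(\bm\Omega\bm n_g)^{-1/2}\bm N_g^{1/2},$$ and let $\bm{\mathcal L}=\operatorname{diag}(\bm{\mathcal A}\bm1)^{-1/2}\bm{\mathcal A}\operatorname{diag}(\bm{\mathcal A}\bm1)^{-1/2}$ with $\bm{\mathcal A}=\bm G\bm\Omega\bm G^\top$. If $\bm u_i$ is an eigenvector of $\bm\Gamma$ with eigenvalue $\lambda_i$, then $\bm v_i=\bm G\bm N_g^{-1/2}\bm u_i$ is an eigenvector of $\bm{\mathcal L}$ with the same eigenvalue $\lambda_i$.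
   Context: A partition indicator matrix $\bm G$ has exactly one entry $1$ in each row and each column nonzero ($G_{ij}=1$ iff node $i$ is in group $j$). $\bm1$ is the all-ones vector and $\operatorname{diag}(\bm x)$ the diagonal matrix with diagonal $\bm x$. *)

(* Defs.v *)
From HB Require Import structures.
From mathcomp Require Import all_boot all_order all_algebra.
Set Implicit Arguments. Unset Strict Implicit. Unset Printing Implicit Defensive.
Import Order.TTheory GRing.Theory Num.Theory.
Local Open Scope ring_scope.

Definition partition_indicator (R : nzRingType) (n k : nat) (G : 'M[R]_(n, k)) : Prop :=
  (forall i j, G i j = 0 \/ G i j = 1) /\
  (forall i, exists! j, G i j = 1) /\
  (forall j, exists i, G i j != 0).

Definition ones (R : nzRingType) (m : nat) : 'cV[R]_m := const_mx 1.

Definition diagc (R : nzRingType) (m : nat) (x : 'cV[R]_m) : 'M[R]_m := diag_mx x^T.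

Definition sqrtc (R : rcfType) (m : nat) (x : 'cV[R]_m) : 'cV[R]_m :=
  \col_i Num.sqrt (x i 0).
Definition invsqrtc (R : rcfType) (m : nat) (x : 'cV[R]_m) : 'cV[R]_m :=
  \col_i (Num.sqrt (x i 0))^-1.

Definition is_eigenvector (R : nzRingType) (m : nat) (M : 'M[R]_m) (u : 'cV[R]_m)
  (lambda : R) : Prop := u != 0 /\ M *m u = lambda *: u.

Section Defs.
Variables (R : rcfType) (n k : nat) (G : 'M[R]_(n, k)) (Omega : 'M[R]_k).

Definition n_g : 'cV[R]_k := G^T *m ones R n.

Definition Gamma_mx : 'M[R]_k :=
  diagc (sqrtc n_g) *m diagc (invsqrtc (Omega *m n_g)) *m Omega
    *m diagc (invsqrtc (Omega *m n_g)) *m diagc (sqrtc n_g).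

Definition A_mx : 'M[R]_n := G *m Omega *m G^T.

Definition L_mx : 'M[R]_n :=
  diagc (invsqrtc (A_mx *m ones R n)) *m A_mx *m diagc (invsqrtc (A_mx *m ones R n)).

End Defs.

(* Main.v *)
Require Import Defs.
From HB Require Import structures.
From mathcomp Require Import all_boot all_order all_algebra.
Import Order.TTheory GRing.Theory Num.Theory.
Local Open Scope ring_scope.
Set Implicit Arguments. Unset Strict Implicit.

Lemma grp_fun (R : rcfType) (n k : nat) (G : 'M[R]_(n, k)) :
  partition_indicator G -> exists g : 'I_n -> 'I_k, forall i j, G i j = (j == g i)%:R.
Proof.
move=> [h01 [huniq _]].
have X : forall i, {j | G i j = 1}.
  move=> i; case: (pickP (fun j => G i j == 1)) => [j /eqP h|H]; first exact (exist _ j h).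
  exfalso; have [j [hj _]] := huniq i; by move: (H j); rewrite hj eqxx.
exists (fun i => sval (X i)) => i j.
case: (X i) => j0 hj0 /=.
case: eqVneq => [->//|ne].
have [j1 [_ hu]] := huniq i.
case: (h01 i j) => // h1; exfalso.
by move: ne; rewrite -(hu _ h1) -(hu _ hj0) eqxx.
Qed.

Section S.
Variables (R : rcfType) (n k : nat) (G : 'M[R]_(n, k)) (g : 'I_n -> 'I_k).
Hypothesis hG : forall i j, G i j = (j == g i)%:R.

Lemma Gx (x : 'cV[R]_k) i : (G *m x) i 0 = x (g i) 0.
Proof.
rewrite mxE (bigD1 (g i)) //= big1 ?addr0; first by rewrite hG eqxx mul1r.
by move=> j /negPf hj; rewrite hG hj mul0r.
Qed.

Lemma ngE j : n_g G j 0 = \sum_i G i j.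
Proof. by rewrite /n_g mxE; apply: eq_bigr => i _; rewrite !mxE mulr1. Qed.

Lemma GtG : G^T *m G = diagc (n_g G).
Proof.
apply/matrixP => j l; rewrite /diagc !mxE.
case: (eqVneq j l) => [<-|ne] /=.
  by rewrite mulr1n; apply: eq_bigr => i _; rewrite !mxE hG; case: (j == g i); rewrite ?mulr1 ?mul0r ?mul1r.
rewrite mulr0n big1 // => i _; rewrite !mxE !hG.
case: (eqVneq j (g i)) => [e|]; last by rewrite mul0r.
by move: ne; rewrite e eq_sym => /negPf ->; rewrite mulr0.
Qed.

Lemma diagG (x : 'cV[R]_k) : diagc (\col_i x (g i) 0) *m G = G *m diagc x.
Proof.
apply/matrixP => i j; rewrite /diagc mul_diag_mx mul_mx_diag !mxE hG.
by case: (eqVneq j (g i)) => [->|_]; rewrite ?mulr1 ?mul1r ?mulr0 ?mul0r.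
Qed.
End S.

Lemma diag_mul (R : rcfType) m (x y z : 'cV[R]_m) :
  (forall j, x j 0 * y j 0 = z j 0) -> diagc x *m diagc y = diagc z.
Proof.
move=> h; apply/matrixP => i j; rewrite /diagc mul_diag_mx !mxE.
by case: (eqVneq i j) => [->|_]; rewrite ?mulr1n ?mulr0n ?mulr0 // h.
Qed.

Lemma diag_mul1 (R : rcfType) m (x y : 'cV[R]_m) :
  (forall j, x j 0 * y j 0 = 1) -> diagc x *m diagc y = 1%:M.
Proof.
move=> h; apply/matrixP => i j; rewrite /diagc mul_diag_mx !mxE.
by case: (eqVneq i j) => [->|_]; rewrite ?mulr1n ?mulr0n ?mulr0 // h.
Qed.

Theorem lemmaA2 (R : rcfType) (n k : nat) (G : 'M[R]_(n, k)) (Omega : 'M[R]_k)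
    (u : 'cV[R]_k) (lambda : R) :
  partition_indicator G ->
  Omega^T = Omega ->
  (forall i j, 0 <= Omega i j <= 1) ->
  (forall i, 0 < (Omega *m n_g G) i 0) ->
  is_eigenvector (Gamma_mx G Omega) u lambda ->
  is_eigenvector (L_mx G Omega) (G *m diagc (invsqrtc (n_g G)) *m u) lambda.
Proof.
move=> hP _ _ _ [hu0 hU].
have [g hG] := grp_fun hP.
have ngpos : forall j, 0 < n_g G j 0.
  move=> j; rewrite ngE; have [_ [_ hc]] := hP; have [i hi] := hc j.
  rewrite (bigD1 i) //=; apply: ltr_pwDl.
    by move: hi; rewrite !hG; case: (j == g i); rewrite ?eqxx //= ltr01.
  by apply: sumr_ge0 => i' _; rewrite hG ler0n.
set ng := n_g G in ngpos hU *.
set d := Omega *m ng.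
set Ds := diagc (sqrtc ng). set Dis := diagc (invsqrtc ng).
set Did := diagc (invsqrtc d).
have sq0 : forall j, Num.sqrt (ng j 0) != 0 by move=> j; rewrite gt_eqF // sqrtr_gt0.
have eis : forall (x : 'cV[R]_k) j, invsqrtc x j 0 = (Num.sqrt (x j 0))^-1 by move=> *; rewrite mxE.
have es : forall (x : 'cV[R]_k) j, sqrtc x j 0 = Num.sqrt (x j 0) by move=> *; rewrite mxE.
have hisS : Dis *m Ds = 1%:M.
  by apply: diag_mul1 => j; rewrite eis es mulVf ?sq0.
have hNis : diagc ng *m Dis = Ds.
  apply: diag_mul => j; rewrite eis es.
  by rewrite -{1}(sqr_sqrtr (ltW (ngpos j))) expr2 -mulrA mulfV ?mulr1.
have hA1 : A_mx G Omega *m ones R n = G *m d by rewrite /A_mx /d /ng /n_g !mulmxA.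
have hDA : diagc (invsqrtc (A_mx G Omega *m ones R n)) = diagc (\col_i (invsqrtc d) (g i) 0).
  congr diagc; apply/matrixP => i j; rewrite hA1 !mxE; congr (_^-1); congr Num.sqrt.
  by transitivity ((G *m d) i 0); [rewrite mxE | rewrite (Gx hG) mxE].
have hDAG : diagc (invsqrtc (A_mx G Omega *m ones R n)) *m G = G *m Did by rewrite hDA diagG.
have hGtDA : G^T *m diagc (invsqrtc (A_mx G Omega *m ones R n)) = Did *m G^T.
  have := congr1 trmx hDAG; rewrite !trmx_mul /Did /diagc !tr_diag_mx => ->.
  by [].
have hL : L_mx G Omega = G *m Did *m Omega *m Did *m G^T.
  rewrite /L_mx; set DA := diagc (invsqrtc (A_mx G Omega *m ones R n)) in hDAG hGtDA *.
  rewrite /A_mx -!mulmxA hGtDA !mulmxA hDAG.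
  by [].
split.
  apply: contra hu0 => /eqP hv.
  have : Dis *m (G^T *m (G *m Dis *m u)) = u.
    by rewrite -!mulmxA (mulmxA G^T G) (GtG hG) (mulmxA (diagc ng)) hNis mulmxA hisS mul1mx.
  by rewrite hv !mulmx0 => <-.
rewrite hL -!mulmxA [G^T *m (G *m _)]mulmxA (GtG hG) [diagc ng *m (_ *m u)]mulmxA hNis.
have key : Did *m (Omega *m (Did *m (Ds *m u))) = lambda *: (Dis *m u).
  have := congr1 (mulmx Dis) hU; rewrite /Gamma_mx -/ng -/d -/Ds -/Did.
  by rewrite -scalemxAr !mulmxA hisS mul1mx -!mulmxA.
by rewrite key -scalemxAr.
Qed.
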